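(* Let $X,Y,Z,S$ be discrete random variables taking values in finite sets $\mathcal X,\mathcal Y,\mathcal Z,\mathcal S$, and suppose $X$ is conditionally independent of $Z$ given $(Y,S)$. Then \[\nu_{X,Z|S}\le\frac{|\mathcal Y|}{|\mathcal Z|}\nu_{X,Y|S}.\]
   Context: For discrete random variables $A,B,S$ with finite ranges $\mathcal A,\mathcal B$, define $\nu_{A,B|S}:=\mathbb{E}_S\sum_{a\in\mathcal A}\frac{1}{|\mathcal A|}\sum_{b\in\mathcal B}\frac{1}{|\mathcal B|}\big|\mathbb{P}(A=a,B=b|S)-\mathbb{P}(A=a|S)\mathbb{P}(B=b|S)\big|$, where the outer expectation is over $S$ (values with positive probability). *)

(* Defs.v *)
From mathcomp Require Import all_boot all_order all_algebra.
Set Implicit Arguments. Unset Strict Implicit. Unset Printing Implicit Defensive.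
Import Order.TTheory GRing.Theory Num.Theory.
Local Open Scope ring_scope.

(* Random variables are functions out of Omega into finite types; the finite
   range of a random variable is the whole codomain type. *)

Definition is_pmf (R : realFieldType) (Omega : finType) (P : Omega -> R) :=
  (forall w, 0 <= P w) /\ \sum_(w : Omega) P w = 1.

Definition Pr (R : realFieldType) (Omega : finType) (P : Omega -> R)
  (E : pred Omega) : R := \sum_(w | E w) P w.

Definition cPr (R : realFieldType) (Omega : finType) (P : Omega -> R)
  (E F : pred Omega) : R := Pr P [pred w | E w && F w] / Pr P F.

Definition nu (R : realFieldType) (Omega : finType) (P : Omega -> R)
  (TA TB TS : finType) (A : Omega -> TA) (B : Omega -> TB) (S : Omega -> TS) : R :=
  \sum_(s : TS | 0 < Pr P [pred w | S w == s])
    Pr P [pred w | S w == s] *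
    \sum_(a : TA) #|TA|%:R^-1 * \sum_(b : TB) #|TB|%:R^-1 *
      `| cPr P [pred w | (A w == a) && (B w == b)] [pred w | S w == s]
         - cPr P [pred w | A w == a] [pred w | S w == s]
           * cPr P [pred w | B w == b] [pred w | S w == s] |.

Definition cond_indep (R : realFieldType) (Omega : finType) (P : Omega -> R)
  (TX TZ TC : finType) (X : Omega -> TX) (Z : Omega -> TZ) (C : Omega -> TC) :=
  forall (c : TC), 0 < Pr P [pred w | C w == c] ->
  forall (x : TX) (z : TZ),
    cPr P [pred w | (X w == x) && (Z w == z)] [pred w | C w == c]
    = cPr P [pred w | X w == x] [pred w | C w == c]
      * cPr P [pred w | Z w == z] [pred w | C w == c].

(* Main.v *)
Require Import Defs.
From mathcomp Require Import all_boot all_order all_algebra.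
From mathcomp Require Import ring lra.
Import Order.TTheory GRing.Theory Num.Theory.
Set Implicit Arguments. Unset Strict Implicit.
Local Open Scope ring_scope.

Section H.
Variables (R : realFieldType) (Omega : finType) (P : Omega -> R).

Lemma Pr_ext (E F : pred Omega) : (forall w, E w = F w) -> Pr P E = Pr P F.
Proof. by move=> h; apply: eq_bigl. Qed.

Lemma cPr_ext (E F : pred Omega) (E' F' : pred Omega) :
  (forall w, E w && F w = E' w) -> (forall w, F w = F' w) ->
  cPr P E F = Pr P E' / Pr P F'.
Proof. by move=> h1 h2; rewrite /cPr (Pr_ext h1) (Pr_ext h2). Qed.

Lemma Pr_part (T : finType) (f : Omega -> T) (E : pred Omega) :
  Pr P E = \sum_(t : T) Pr P [pred w | E w && (f w == t)].
Proof.
rewrite /Pr (partition_big f predT) //=.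
Qed.

Lemma Pr_ge0 (E : pred Omega) : (forall w, 0 <= P w) -> 0 <= Pr P E.
Proof. by move=> h; apply: sumr_ge0. Qed.

Lemma Pr_sub (E F : pred Omega) : (forall w, 0 <= P w) ->
  (forall w, E w -> F w) -> Pr P E <= Pr P F.
Proof.
move=> h0 h; rewrite /Pr [X in _ <= X]big_mkcond [X in X <= _]big_mkcond.
apply: ler_sum => w _; case: (boolP (E w)) => He; first by rewrite (h _ He).
by case: (F w).
Qed.
End H.
Lemma core (R : realFieldType) (TY TZ : finType) (ax ps : R) (axz az : TZ -> R)
  (axzy azy : TZ -> TY -> R) (axy ay : TY -> R) :
 (forall z, axz z = \sum_y axzy z y) ->
 (forall z, az z = \sum_y azy z y) ->
 ps = \sum_y ay y ->
 (forall z y, 0 <= azy z y) ->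
 (forall y, \sum_z azy z y = ay y) ->
 (forall z y, ay y = 0 -> axzy z y = 0) ->
 (forall z y, ay y != 0 -> axzy z y * ay y = axy y * azy z y) ->
 \sum_z `|axz z * ps - ax * az z| <= \sum_y `|axy y * ps - ax * ay y|.
Proof.
move=> ha hb hps hge hsum h0 hci.
have ay0 : forall y, 0 <= ay y by move=> y; rewrite -(hsum y); apply: sumr_ge0.
have azy0 : forall z y, ay y = 0 -> azy z y = 0.
  move=> z y h; move: (hsum y); rewrite h => /psumr_eq0P H; exact: H.
have eqz : forall z, axz z * ps - ax * az z
   = \sum_y (azy z y / ay y) * (axy y * ps - ax * ay y).
  move=> z; rewrite ha hb hps !mulr_suml !mulr_sumr -sumrB; apply: eq_bigr => y _.
  case: (eqVneq (ay y) 0) => h.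
    by rewrite h0 // azy0 // h !(mul0r, mulr0, subr0, invr0).
  have e : axzy z y = axy y * azy z y / ay y by rewrite -hci // mulfK.
  rewrite e; field; exact: h.
apply: (le_trans (y := \sum_z \sum_y `|azy z y / ay y * (axy y * ps - ax * ay y)|)).
  apply: ler_sum => z _; rewrite eqz; exact: ler_norm_sum.
rewrite exchange_big /=; apply: ler_sum => y _.
under eq_bigr => z _ do rewrite normrM (ger0_norm (divr_ge0 (hge z y) (ay0 y))).
rewrite -mulr_suml -mulr_suml hsum.
case: (eqVneq (ay y) 0) => h.
  by rewrite h invr0 mulr0 mul0r.
by rewrite mulfV // mul1r.
Qed.

Ltac bcase := move=> w /=; rewrite ?xpair_eqE; repeat (match goal with |- context [(?a == ?b)] => case: (a == b) end); done.

Theorem lemma18 (R : realFieldType) (Omega : finType) (P : Omega -> R)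
  (TX TY TZ TS : finType)
  (X : Omega -> TX) (Y : Omega -> TY) (Z : Omega -> TZ) (S : Omega -> TS) :
  is_pmf P ->
  cond_indep P X Z (fun w => (Y w, S w)) ->
  nu P X Z S <= (#|TY|%:R / #|TZ|%:R) * nu P X Y S.
Proof.
move=> [P0 P1] ci.
have [w0 _] : exists w : Omega, true.
  case: (pickP (@predT Omega)) => [w _|h]; first by exists w.
  exfalso; move: P1; rewrite big1 => [/eqP|w _]; first by rewrite eq_sym oner_eq0.
  by have := h w.
have Yn : (#|TY|%:R : R) != 0 by rewrite pnatr_eq0 -lt0n; apply/card_gt0P; exists (Y w0).
rewrite /nu mulr_sumr; apply: ler_sum => s hs.
rewrite mulrCA; apply: ler_wpM2l; first exact: ltW.
rewrite mulr_sumr; apply: ler_sum => x _.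
rewrite mulrCA; apply: ler_wpM2l; first by rewrite invr_ge0 ler0n.
rewrite -!mulr_sumr mulrA.
have -> : #|TY|%:R / #|TZ|%:R * #|TY|%:R^-1 = #|TZ|%:R^-1 :> R.
  by rewrite mulrC mulrA mulVf ?mul1r.
apply: ler_wpM2l; first by rewrite invr_ge0 ler0n.
set ps := Pr P [pred w | S w == s].
have psn : ps != 0 by rewrite gt_eqF.
pose ax := Pr P [pred w | (X w == x) && (S w == s)].
pose axz z := Pr P [pred w | (X w == x) && (Z w == z) && (S w == s)].
pose az z := Pr P [pred w | (Z w == z) && (S w == s)].
pose axzy z y := Pr P [pred w | (X w == x) && (Z w == z) && (S w == s) && (Y w == y)].
pose azy z y := Pr P [pred w | (Z w == z) && (S w == s) && (Y w == y)].
pose axy y := Pr P [pred w | (X w == x) && (Y w == y) && (S w == s)].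
pose ay y := Pr P [pred w | (Y w == y) && (S w == s)].
have nrm : forall a b c : R, `|a / ps - b / ps * (c / ps)| = `|a * ps - b * c| / ps ^+ 2.
  move=> a b c; rewrite -(ger0_norm (exprn_ge0 2 (ltW hs))) -normf_div; congr `|_|.
  rewrite -/ps; field; exact: psn.
have e1 z : cPr P [pred w | (X w == x) && (Z w == z)] [pred w | S w == s] = axz z / ps.
  by apply: cPr_ext; bcase.
have e2 : cPr P [pred w | X w == x] [pred w | S w == s] = ax / ps.
  by apply: cPr_ext; bcase.
have e3 z : cPr P [pred w | Z w == z] [pred w | S w == s] = az z / ps.
  by apply: cPr_ext; bcase.
have e4 y : cPr P [pred w | (X w == x) && (Y w == y)] [pred w | S w == s] = axy y / ps.
  by apply: cPr_ext; bcase.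
have e5 y : cPr P [pred w | Y w == y] [pred w | S w == s] = ay y / ps.
  by apply: cPr_ext; bcase.
under eq_bigr => z _ do rewrite e1 e2 e3 nrm.
under [X in _ <= X]eq_bigr => y _ do rewrite e4 e2 e5 nrm.
rewrite -!mulr_suml; apply: ler_wpM2r; first by rewrite invr_ge0 exprn_ge0 // ltW.
apply: (@core _ _ _ _ _ _ _ axzy azy axy ay).
- move=> z; rewrite /axz (Pr_part P Y); apply: eq_bigr => y _; apply: Pr_ext; bcase.
- move=> z; rewrite /az (Pr_part P Y); apply: eq_bigr => y _; apply: Pr_ext; bcase.
- rewrite /ps (Pr_part P Y); apply: eq_bigr => y _; apply: Pr_ext; bcase.
- by move=> z y; apply: Pr_ge0.
- move=> y; rewrite /ay (Pr_part P Z); apply: eq_bigr => z _; apply: Pr_ext; bcase.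
- move=> z y h; apply/eqP; rewrite eq_le Pr_ge0 // andbT -[X in _ <= X]h.
  apply: Pr_sub => //; bcase.
- move=> z y h.
  have hp : 0 < Pr P [pred w | (Y w, S w) == (y, s)].
    rewrite lt0r Pr_ge0 // andbT; apply: contra h => /eqP <-.
    by apply/eqP; rewrite /ay; apply: Pr_ext; bcase.
  have := ci _ hp x z.
  rewrite (@cPr_ext _ _ _ _ _ [pred w | (X w == x) && (Z w == z) && (S w == s) && (Y w == y)] [pred w | (Y w == y) && (S w == s)]); try bcase.
  rewrite (@cPr_ext _ _ _ _ _ [pred w | (X w == x) && (Y w == y) && (S w == s)] [pred w | (Y w == y) && (S w == s)]); try bcase.
  rewrite (@cPr_ext _ _ _ _ _ [pred w | (Z w == z) && (S w == s) && (Y w == y)] [pred w | (Y w == y) && (S w == s)]); try bcase.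
  rewrite -/(axzy z y) -/(axy y) -/(azy z y) -/(ay y) => e.
  by rewrite -(divfK h (axzy z y)) e; field.
Qed.
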